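(* Let $\boldsymbol\gamma\in(0,\infty)^B$, $P>0$, and parameters $0<\alpha<\beta$, $\kappa>0$, $a\in\mathbb R$ with $\kappa\log_2\alpha+a=\log_2(1+\alpha)$ and $\kappa(1+\alpha)\le\alpha$. Define \[ I^{\rm ref}(\rho)=\begin{cases}\log_2(1+\rho),&0\le\rho\le\alpha,\\ \kappa\log_2\rho+a,&\alpha<\rho\le\beta,\\ \kappa\log_2\beta+a,&\rho>\beta.\end{cases} \] A solution of maximizing $\sum_{b=1}^B I^{\rm ref}(p_b\gamma_b)$ subject to $\sum_{b=1}^B p_b\le BP$, $p_b\ge0$, is: $p^{\rm ref}_b=\beta/\gamma_b$ for all $b$ if $\frac1B\sum_b\beta/\gamma_b<P$; otherwise \[ p^{\rm ref}_b=\begin{cases}\beta/\gamma_b,&\eta\ge\frac{\beta}{\kappa\gamma_b},\\ \kappa\eta,&\frac{\alpha}{\kappa\gamma_b}\le\eta<\frac{\beta}{\kappa\gamma_b},\\ \alpha/\gamma_b,&\frac{\alpha+1}{\gamma_b}\le\eta<\frac{\alpha}{\kappa\gamma_b},\\ \eta-1/\gamma_b,&\frac1{\gamma_b}\le\eta<\frac{\alpha+1}{\gamma_b},\\ 0,&\text{otherwise},\end{cases} \] for $b=1,\dots,B$, where $\eta$ is chosen such that $\frac1B\sum_{b=1}^B p^{\rm ref}_b=P$.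
   Context: The function $I^{\rm ref}$ is a piecewise approximation (refined truncated water-filling) of a discrete-input mutual information curve; the condition $\kappa(1+\alpha)\le\alpha$ ensures that the slope of $I^{\rm ref}$ does not increase at $\rho=\alpha$. *)

(* Defs.v *)
From Stdlib Require Import Reals Lra.
Open Scope R_scope.

Definition log2 (x : R) : R := ln x / ln 2.

(* sumB B f = f 0 + f 1 + ... + f (B-1)  (bands indexed 0..B-1) *)
Fixpoint sumB (B : nat) (f : nat -> R) : R :=
  match B with
  | O => 0
  | S n => sumB n f + f n
  end.

Definition Iref (alpha beta kappa a rho : R) : R :=
  if Rle_dec rho alpha then log2 (1 + rho)
  else if Rle_dec rho beta then kappa * log2 rho + a
  else kappa * log2 beta + a.

Definition objective (B : nat) (alpha beta kappa a : R) (gamma p : nat -> R) : R :=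
  sumB B (fun b => Iref alpha beta kappa a (p b * gamma b)).

Definition feasible (B : nat) (P : R) (p : nat -> R) : Prop :=
  (forall b, (b < B)%nat -> 0 <= p b) /\ sumB B p <= INR B * P.

Definition is_solution (B : nat) (P alpha beta kappa a : R) (gamma p : nat -> R) : Prop :=
  feasible B P p /\
  forall q, feasible B P q ->
    objective B alpha beta kappa a gamma q <= objective B alpha beta kappa a gamma p.

(* The water-level allocation p^ref_b(eta), conditions tested in the paper's order. *)
Definition pref (alpha beta kappa eta : R) (gamma : nat -> R) (b : nat) : R :=
  let g := gamma b in
  if Rle_dec (beta / (kappa * g)) eta then beta / g
  else if Rle_dec (alpha / (kappa * g)) eta then kappa * eta
  else if Rle_dec ((alpha + 1) / g) eta then alpha / g
  else if Rle_dec (1 / g) eta then eta - 1 / g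
  else 0.

(* Main.v *)
Require Import Defs.
From Stdlib Require Import Reals Lra Lia Psatz.
Open Scope R_scope.

Lemma ln_lin u v : 0 < u -> 0 < v -> ln u <= ln v + (u - v) / v.
Proof.
  intros Hu Hv.
  assert (H1 := exp_ineq1_le (ln (u / v))).
  rewrite exp_ln in H1 by (apply Rdiv_lt_0_compat; auto).
  unfold Rdiv in *.
  rewrite ln_mult in H1 by (auto; apply Rinv_0_lt_compat; auto).
  rewrite ln_Rinv in H1 by auto.
  assert ((u - v) * / v = u * / v - 1) by (field; lra). lra.
Qed.

Lemma ln_le' u v : 0 < u -> u <= v -> ln u <= ln v.
Proof.
  intros. destruct (Req_dec u v). subst; lra.
  apply Rlt_le, ln_increasing; lra.
Qed.

Lemma div_le_inv a b c : 0 < b -> 0 < c -> a * c <= b -> a / b <= / c.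
Proof.
  intros. apply Rmult_le_reg_r with (r := b * c). nra.
  replace (a / b * (b * c)) with (a * c) by (field; lra).
  replace (/ c * (b * c)) with b by (field; lra). lra.
Qed.

Lemma inv_le_div a b c : 0 < b -> 0 < c -> b <= a * c -> / c <= a / b.
Proof.
  intros. apply Rmult_le_reg_r with (r := b * c). nra.
  replace (a / b * (b * c)) with (a * c) by (field; lra).
  replace (/ c * (b * c)) with b by (field; lra). lra.
Qed.

Definition Gf (al be ka A x : R) : R :=
  if Rle_dec x al then ln (1 + x)
  else if Rle_dec x be then ka * ln x + A else ka * ln be + A.

Definition yfun (al be ka t : R) : R :=
  if Rle_dec be (ka * t) then be
  else if Rle_dec al (ka * t) then ka * t
  else if Rle_dec (al + 1) t then al
  else if Rle_dec 1 t then t - 1 else 0.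

Section K.
Variables al be ka A : R.
Hypothesis Hal : 0 < al.
Hypothesis Hab : al < be.
Hypothesis Hka : 0 < ka.
Hypothesis Hsl : ka * (1 + al) <= al.
Hypothesis HA : ka * ln al + A = ln (1 + al).

Lemma Gf_low x : x <= al -> Gf al be ka A x = ln (1 + x).
Proof. intros. unfold Gf. destruct (Rle_dec x al); [reflexivity | lra]. Qed.

Lemma Gf_mid y : al <= y <= be -> Gf al be ka A y = ka * ln y + A.
Proof.
  intros [H1 H2]. unfold Gf. destruct (Rle_dec y al).
  - replace y with al by lra. lra.
  - destruct (Rle_dec y be); [reflexivity | lra].
Qed.

Lemma Gf_hi x : be < x -> Gf al be ka A x = ka * ln be + A.
Proof.
  intros. unfold Gf. destruct (Rle_dec x al); [lra|].
  destruct (Rle_dec x be); [lra | reflexivity].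
Qed.

Lemma F2 y x : 0 < y -> 0 < x -> ka * ln x <= ka * ln y + ka * ((x - y) / y).
Proof.
  intros Hy Hx. assert (H := ln_lin x y Hx Hy).
  assert (ka * ln x <= ka * (ln y + (x - y) / y)) by (apply Rmult_le_compat_l; lra).
  lra.
Qed.

Lemma F2' t x : 0 < t -> 0 < x -> ka * ln x <= ka * ln (ka * t) + (x - ka * t) / t.
Proof.
  intros. replace ((x - ka * t) / t) with (ka * ((x - ka * t) / (ka * t))) by (field; lra).
  apply F2; nra.
Qed.

Lemma R2 x : al < x -> Gf al be ka A x <= ln (1 + al) + ka / al * (x - al).
Proof.
  intros. unfold Gf. destruct (Rle_dec x al); [lra|].
  destruct (Rle_dec x be).
  - pose proof (F2 al x Hal ltac:(lra)). unfold Rdiv in *. lra.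
  - pose proof (F2 al be Hal ltac:(lra)).
    assert (0 <= ka / al * (x - be)) by (apply Rmult_le_pos; [apply Rlt_le, Rdiv_lt_0_compat|]; lra).
    unfold Rdiv in *. lra.
Qed.

Lemma Gf_max x : 0 <= x -> Gf al be ka A x <= ka * ln be + A.
Proof.
  intros. unfold Gf. destruct (Rle_dec x al).
  - pose proof (ln_le' (1 + x) (1 + al) ltac:(lra) ltac:(lra)).
    pose proof (ln_le' al be ltac:(lra) ltac:(lra)).
    assert (ka * ln al <= ka * ln be) by (apply Rmult_le_compat_l; lra). lra.
  - destruct (Rle_dec x be); [|lra].
    pose proof (ln_le' x be ltac:(lra) ltac:(lra)).
    assert (ka * ln x <= ka * ln be) by (apply Rmult_le_compat_l; lra). lra.
Qed.

Lemma key t x : 0 < t -> 0 <= x ->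
  Gf al be ka A x <= Gf al be ka A (yfun al be ka t) + (x - yfun al be ka t) / t.
Proof.
  intros Ht Hx.
  assert (Hc1 : 0 < / (1 + al)) by (apply Rinv_0_lt_compat; lra).
  assert (Hk : ka / al <= / (1 + al)) by (apply div_le_inv; lra).
  assert (Hk0 : 0 < ka / al) by (apply Rdiv_lt_0_compat; lra).
  assert (Hst : 0 < / t) by (apply Rinv_0_lt_compat; lra).
  assert (F1 : forall z, 0 <= z -> ln (1 + z) <= ln (1 + al) + (z - al) / (1 + al)).
  { intros z Hz. pose proof (ln_lin (1 + z) (1 + al) ltac:(lra) ltac:(lra)).
    unfold Rdiv in *. lra. }
  unfold yfun.
  destruct (Rle_dec be (ka * t)) as [h1|h1].
  { rewrite (Gf_mid be) by lra.
    assert (Hs : / t <= ka / be) by (apply inv_le_div; lra).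
    assert (Hm : ka / be <= ka / al).
    { unfold Rdiv. apply Rmult_le_compat_l; [lra|]. apply Rinv_le_contravar; lra. }
    destruct (Rle_dec x al).
    - rewrite Gf_low by lra.
      pose proof (F1 x Hx).
      pose proof (F2 be al ltac:(lra) ltac:(lra)).
      assert (0 <= (ka / be - / t) * (be - al)) by (apply Rmult_le_pos; lra).
      assert (0 <= (/ (1 + al) - / t) * (al - x)) by (apply Rmult_le_pos; lra).
      unfold Rdiv in *. lra.
    - destruct (Rle_dec x be).
      + rewrite (Gf_mid x) by lra.
        pose proof (F2 be x ltac:(lra) ltac:(lra)).
        assert (0 <= (ka / be - / t) * (be - x)) by (apply Rmult_le_pos; lra).
        unfold Rdiv in *. lra.
      + rewrite Gf_hi by lra.
        assert (0 <= / t * (x - be)) by (apply Rmult_le_pos; lra).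
        unfold Rdiv in *. lra. }
  destruct (Rle_dec al (ka * t)) as [h2|h2].
  { rewrite (Gf_mid (ka * t)) by lra.
    assert (Hs : / t <= ka / al) by (apply inv_le_div; lra).
    destruct (Rle_dec x al).
    - rewrite Gf_low by lra.
      pose proof (F1 x Hx).
      pose proof (F2' t al Ht Hal).
      assert (0 <= (/ (1 + al) - / t) * (al - x)) by (apply Rmult_le_pos; lra).
      unfold Rdiv in *. lra.
    - destruct (Rle_dec x be).
      + rewrite (Gf_mid x) by lra.
        pose proof (F2' t x Ht ltac:(lra)). lra.
      + rewrite Gf_hi by lra.
        pose proof (F2' t be Ht ltac:(lra)).
        assert (0 <= / t * (x - be)) by (apply Rmult_le_pos; lra).
        unfold Rdiv in *. lra. }
  destruct (Rle_dec (al + 1) t) as [h3|h3].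
  { rewrite (Gf_low al) by lra.
    assert (Hs1 : ka / al <= / t) by (apply div_le_inv; lra).
    assert (Hs2 : / t <= / (1 + al)) by (apply Rinv_le_contravar; lra).
    destruct (Rle_dec x al).
    - rewrite Gf_low by lra.
      pose proof (F1 x Hx).
      assert (0 <= (/ (1 + al) - / t) * (al - x)) by (apply Rmult_le_pos; lra).
      unfold Rdiv in *. lra.
    - pose proof (R2 x ltac:(lra)).
      assert (0 <= (/ t - ka / al) * (x - al)) by (apply Rmult_le_pos; lra).
      unfold Rdiv in *. lra. }
  destruct (Rle_dec 1 t) as [h4|h4].
  { rewrite (Gf_low (t - 1)) by lra.
    replace (1 + (t - 1)) with t by ring.
    assert (Hs2 : / (1 + al) <= / t) by (apply Rinv_le_contravar; lra).
    destruct (Rle_dec x al).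
    - rewrite Gf_low by lra.
      pose proof (ln_lin (1 + x) t ltac:(lra) Ht).
      unfold Rdiv in *. lra.
    - pose proof (R2 x ltac:(lra)).
      pose proof (ln_lin (1 + al) t ltac:(lra) Ht).
      assert (0 <= (/ t - ka / al) * (x - al)) by (apply Rmult_le_pos; lra).
      unfold Rdiv in *. lra. }
  { rewrite (Gf_low 0) by lra.
    rewrite Rplus_0_r, ln_1.
    assert (Hs : / 1 <= / t) by (apply Rinv_le_contravar; lra).
    rewrite Rinv_1 in Hs.
    assert (0 <= x * (/ t - 1)) by (apply Rmult_le_pos; lra).
    destruct (Rle_dec x al).
    - rewrite Gf_low by lra.
      pose proof (ln_lin (1 + x) 1 ltac:(lra) ltac:(lra)).
      rewrite ln_1 in H0. unfold Rdiv in *. rewrite Rinv_1 in H0. lra.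
    - pose proof (R2 x ltac:(lra)).
      pose proof (ln_lin (1 + al) 1 ltac:(lra) ltac:(lra)).
      rewrite ln_1 in H1. unfold Rdiv in *. rewrite Rinv_1 in H1.
      assert (/ (1 + al) <= 1) by (rewrite <- Rinv_1; apply Rinv_le_contravar; lra).
      assert (0 <= (1 - ka * / al) * (x - al)) by (apply Rmult_le_pos; lra).
      lra. }
Qed.

End K.
Section Y.
Variables al be ka : R.
Hypothesis Hal : 0 < al.
Hypothesis Hab : al < be.
Hypothesis Hka : 0 < ka.
Hypothesis Hsl : ka * (1 + al) <= al.

Lemma yfun_nonneg t : 0 <= yfun al be ka t.
Proof. unfold yfun. repeat destruct Rle_dec; lra. Qed.

Lemma yfun_nonpos t : t <= 0 -> yfun al be ka t = 0.
Proof.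
  intros. assert (ka * t <= 0) by nra.
  unfold yfun. repeat destruct Rle_dec; lra.
Qed.

Lemma yfun_clamp t : yfun al be ka t =
  Rmin al (Rmax 0 (t - 1)) + Rmin (be - al) (Rmax 0 (ka * t - al)).
Proof.
  unfold yfun, Rmin, Rmax.
  destruct (Rle_dec (al + 1) t).
  - repeat destruct Rle_dec; try lra.
  - assert (ka * t < al) by nra.
    repeat destruct Rle_dec; try lra.
Qed.

Lemma clamp_lip c u v : 0 <= c ->
  Rabs (Rmin c (Rmax 0 u) - Rmin c (Rmax 0 v)) <= Rabs (u - v).
Proof.
  intros. unfold Rmin, Rmax, Rabs.
  repeat destruct Rle_dec; repeat destruct Rcase_abs; lra.
Qed.

Lemma yfun_lip t s : Rabs (yfun al be ka t - yfun al be ka s) <= (1 + ka) * Rabs (t - s).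
Proof.
  rewrite !yfun_clamp.
  set (A1 := Rmin al (Rmax 0 (t - 1))).
  set (A2 := Rmin al (Rmax 0 (s - 1))).
  set (B1 := Rmin (be - al) (Rmax 0 (ka * t - al))).
  set (B2 := Rmin (be - al) (Rmax 0 (ka * s - al))).
  replace (A1 + B1 - (A2 + B2)) with ((A1 - A2) + (B1 - B2)) by ring.
  eapply Rle_trans; [apply Rabs_triang|].
  assert (HA : Rabs (A1 - A2) <= Rabs (t - s)).
  { unfold A1, A2. eapply Rle_trans; [apply clamp_lip; lra|].
    replace (t - 1 - (s - 1)) with (t - s) by ring. lra. }
  assert (HB : Rabs (B1 - B2) <= ka * Rabs (t - s)).
  { unfold B1, B2. eapply Rle_trans; [apply clamp_lip; lra|].
    replace (ka * t - al - (ka * s - al)) with (ka * (t - s)) by ring.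
    rewrite Rabs_mult, (Rabs_pos_eq ka) by lra. lra. }
  lra.
Qed.

Lemma pref_eq eta (gamma : nat -> R) b : 0 < gamma b ->
  pref al be ka eta gamma b = yfun al be ka (eta * gamma b) / gamma b.
Proof.
  intros Hg. unfold pref, yfun. cbv zeta.
  set (g := gamma b) in *.
  assert (I1 : be / (ka * g) <= eta <-> be <= ka * (eta * g)).
  { split; intros H.
    - apply Rmult_le_compat_r with (r := ka * g) in H; [|nra].
      replace (be / (ka * g) * (ka * g)) with be in H by (field; lra). lra.
    - apply Rmult_le_reg_r with (r := ka * g); [nra|].
      replace (be / (ka * g) * (ka * g)) with be by (field; lra). lra. }
  assert (I2 : al / (ka * g) <= eta <-> al <= ka * (eta * g)).
  { split; intros H.
    - apply Rmult_le_compat_r with (r := ka * g) in H; [|nra].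
      replace (al / (ka * g) * (ka * g)) with al in H by (field; lra). lra.
    - apply Rmult_le_reg_r with (r := ka * g); [nra|].
      replace (al / (ka * g) * (ka * g)) with al by (field; lra). lra. }
  assert (I3 : (al + 1) / g <= eta <-> al + 1 <= eta * g).
  { split; intros H.
    - apply Rmult_le_compat_r with (r := g) in H; [|lra].
      replace ((al + 1) / g * g) with (al + 1) in H by (field; lra). lra.
    - apply Rmult_le_reg_r with (r := g); [lra|].
      replace ((al + 1) / g * g) with (al + 1) by (field; lra). lra. }
  assert (I4 : 1 / g <= eta <-> 1 <= eta * g).
  { split; intros H.
    - apply Rmult_le_compat_r with (r := g) in H; [|lra].
      replace (1 / g * g) with 1 in H by (field; lra). lra.
    - apply Rmult_le_reg_r with (r := g); [lra|].
      replace (1 / g * g) with 1 by (field; lra). lra. }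
  repeat match goal with |- context [Rle_dec ?x ?y] => destruct (Rle_dec x y) end;
  try (exfalso; tauto); field; lra.
Qed.

Lemma pref_lip (gamma : nat -> R) b e1 e2 : 0 < gamma b ->
  Rabs (pref al be ka e1 gamma b - pref al be ka e2 gamma b) <= (1 + ka) * Rabs (e1 - e2).
Proof.
  intros Hg. rewrite !pref_eq by auto.
  set (g := gamma b) in *.
  set (Y1 := yfun al be ka (e1 * g)). set (Y2 := yfun al be ka (e2 * g)).
  replace (Y1 / g - Y2 / g) with ((Y1 - Y2) * / g) by (field; lra).
  rewrite Rabs_mult, (Rabs_pos_eq (/ g)) by (apply Rlt_le, Rinv_0_lt_compat; lra).
  assert (H := yfun_lip (e1 * g) (e2 * g)). fold Y1 Y2 in H.
  replace (e1 * g - e2 * g) with ((e1 - e2) * g) in H by ring.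
  rewrite Rabs_mult, (Rabs_pos_eq g) in H by lra.
  apply Rmult_le_compat_r with (r := / g) in H; [|apply Rlt_le, Rinv_0_lt_compat; lra].
  replace ((1 + ka) * (Rabs (e1 - e2) * g) * / g) with ((1 + ka) * Rabs (e1 - e2)) in H
    by (field; lra).
  exact H.
Qed.
End Y.

Lemma lip_cont f L : 0 <= L -> (forall x y, Rabs (f x - f y) <= L * Rabs (x - y)) -> continuity f.
Proof.
  intros HL Hf x. unfold continuity_pt, continue_in, limit1_in, limit_in.
  intros eps Heps. exists (eps / (L + 1)). split.
  - apply Rdiv_lt_0_compat; lra.
  - intros y [_ Hy]. simpl in *. unfold R_dist in *.
    assert (Hd : 0 <= Rabs (y - x)) by apply Rabs_pos.
    assert (H2 : Rabs (y - x) * (L + 1) < eps).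
    { apply Rmult_lt_compat_r with (r := L + 1) in Hy; [|lra].
      replace (eps / (L + 1) * (L + 1)) with eps in Hy by (field; lra). lra. }
    specialize (Hf y x). nra.
Qed.

Lemma sumB_le n f g : (forall b, (b < n)%nat -> f b <= g b) -> sumB n f <= sumB n g.
Proof.
  induction n; intros H; simpl; [lra|].
  apply Rplus_le_compat; [apply IHn; intros; apply H; lia | apply H; lia].
Qed.

Lemma sumB_ext n f g : (forall b, (b < n)%nat -> f b = g b) -> sumB n f = sumB n g.
Proof.
  induction n; intros H; simpl; [lra|].
  rewrite IHn by (intros; apply H; lia). rewrite H by lia. reflexivity.
Qed.

Lemma sumB_lin n f g h K :
  sumB n (fun b => f b + K * (g b - h b)) = sumB n f + K * (sumB n g - sumB n h).
Proof. induction n; simpl; [ring | rewrite IHn; ring]. Qed.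

Lemma sumB_zero n : sumB n (fun _ => 0) = 0.
Proof. induction n; simpl; [ring | rewrite IHn; ring]. Qed.

Lemma sumB_nonneg n f : (forall b, (b < n)%nat -> 0 <= f b) -> 0 <= sumB n f.
Proof.
  induction n; intros H; simpl; [lra|].
  assert (0 <= sumB n f) by (apply IHn; intros; apply H; lia).
  assert (0 <= f n) by (apply H; lia). lra.
Qed.

Lemma sumB_ge_term n f : (forall b, (b < n)%nat -> 0 <= f b) ->
  forall b, (b < n)%nat -> f b <= sumB n f.
Proof.
  induction n; intros H b Hb; [lia|]. simpl.
  destruct (Nat.eq_dec b n).
  - subst. assert (0 <= sumB n f) by (apply sumB_nonneg; intros; apply H; lia). lra.
  - assert (f b <= sumB n f) by (apply IHn; [intros; apply H; lia | lia]).
    assert (0 <= f n) by (apply H; lia). lra.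
Qed.

Lemma cont_sumB n (F : R -> nat -> R) :
  (forall b, (b < n)%nat -> continuity (fun x => F x b)) ->
  continuity (fun x => sumB n (F x)).
Proof.
  induction n; intros H; simpl.
  - apply continuity_const. intros x y. reflexivity.
  - apply (continuity_plus (fun x => sumB n (F x)) (fun x => F x n)).
    + apply IHn. intros; apply H; lia.
    + apply H; lia.
Qed.

Theorem theorem3 (B : nat) (gamma : nat -> R) (P alpha beta kappa a : R)
  (HB : (0 < B)%nat)
  (Hgamma : forall b, (b < B)%nat -> 0 < gamma b)
  (HP : 0 < P)
  (Halpha : 0 < alpha) (Hab : alpha < beta) (Hkappa : 0 < kappa)
  (Ha : kappa * log2 alpha + a = log2 (1 + alpha))
  (Hslope : kappa * (1 + alpha) <= alpha) :
  (/ INR B * sumB B (fun b => beta / gamma b) < P ->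
     is_solution B P alpha beta kappa a gamma (fun b => beta / gamma b)) /\
  (P <= / INR B * sumB B (fun b => beta / gamma b) ->
     (exists eta, / INR B * sumB B (pref alpha beta kappa eta gamma) = P) /\
     (forall eta, / INR B * sumB B (pref alpha beta kappa eta gamma) = P ->
        is_solution B P alpha beta kappa a gamma (pref alpha beta kappa eta gamma))).
Proof.
  assert (Hc : 0 < ln 2) by (pose proof ln_lt_2; lra).
  set (c := ln 2) in *.
  set (A := a * c).
  assert (HA : kappa * ln alpha + A = ln (1 + alpha)).
  { unfold log2 in Ha. unfold A.
    replace (ln (1 + alpha)) with ((ln (1 + alpha) / c) * c) by (field; lra).
    fold c in Ha. rewrite <- Ha. field. lra. }
  assert (IG : forall x, Iref alpha beta kappa a x = Gf alpha beta kappa A x / c).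
  { intros x. unfold Iref, Gf, log2. fold c.
    destruct (Rle_dec x alpha); [|destruct (Rle_dec x beta)]; unfold A; field; lra. }
  assert (HBp : 0 < INR B) by (apply lt_0_INR; exact HB).
  assert (Hic : 0 < / c) by (apply Rinv_0_lt_compat; lra).
  split.
  - intros H1. split.
    + split.
      * intros b Hb. apply Rlt_le, Rdiv_lt_0_compat; [lra | auto].
      * set (S := sumB B (fun b => beta / gamma b)) in *.
        assert (S = INR B * (/ INR B * S)) by (field; lra).
        assert (INR B * (/ INR B * S) < INR B * P) by (apply Rmult_lt_compat_l; lra).
        lra.
    + intros q [Hq _]. unfold objective. apply sumB_le. intros b Hb. cbv beta.
      rewrite !IG.
      replace (beta / gamma b * gamma b) with beta by (field; specialize (Hgamma b Hb); lra).
      rewrite (Gf_mid alpha beta kappa A HA beta) by lra.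
      unfold Rdiv. apply Rmult_le_compat_r; [lra|].
      apply (Gf_max alpha beta kappa A); auto.
      assert (0 <= q b) by auto. specialize (Hgamma b Hb). nra.
  - intros H2.
    set (Sp := fun eta => sumB B (pref alpha beta kappa eta gamma)).
    split.
    + set (eta0 := sumB B (fun b => beta / (kappa * gamma b))).
      assert (Hpos : forall b, (b < B)%nat -> 0 <= beta / (kappa * gamma b)).
      { intros b Hb. specialize (Hgamma b Hb). apply Rlt_le, Rdiv_lt_0_compat; nra. }
      assert (He0 : 0 <= eta0) by (apply sumB_nonneg; auto).
      assert (S0 : Sp 0 = 0).
      { unfold Sp. transitivity (sumB B (fun _ => 0)); [|apply sumB_zero]. apply sumB_ext. intros b Hb.
        rewrite pref_eq by auto. rewrite yfun_nonpos by lra. unfold Rdiv; ring. }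
      assert (S1 : Sp eta0 = sumB B (fun b => beta / gamma b)).
      { unfold Sp. apply sumB_ext. intros b Hb. unfold pref. cbv zeta.
        destruct (Rle_dec (beta / (kappa * gamma b)) eta0); [reflexivity|].
        exfalso. apply n. apply (sumB_ge_term B (fun b => beta / (kappa * gamma b))); auto. }
      assert (HBP : INR B * P <= sumB B (fun b => beta / gamma b)).
      { set (S := sumB B (fun b => beta / gamma b)) in *.
        assert (S = INR B * (/ INR B * S)) by (field; lra).
        assert (INR B * P <= INR B * (/ INR B * S)) by (apply Rmult_le_compat_l; lra).
        lra. }
      assert (Hcont : continuity (fun eta => Sp eta - INR B * P)).
      { apply (continuity_minus Sp (fun _ => INR B * P)).
        - unfold Sp. apply (cont_sumB B (fun eta b => pref alpha beta kappa eta gamma b)).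
          intros b Hb. apply (lip_cont _ (1 + kappa)); [lra|].
          intros x y. apply pref_lip; auto.
        - apply continuity_const. intros x y; reflexivity. }
      destruct (IVT_cor _ 0 eta0 Hcont He0) as [z [_ Hz]].
      { rewrite S0, S1. assert (0 < INR B * P) by nra. nra. }
      exists z. fold (Sp z).
      assert (Sp z = INR B * P) by lra. rewrite H. field. lra.
    + intros eta Heta. fold (Sp eta) in Heta.
      assert (HS : Sp eta = INR B * P).
      { rewrite <- Heta. field. lra. }
      assert (Hep : 0 < eta).
      { destruct (Rlt_le_dec 0 eta) as [h|h]; auto. exfalso.
        assert (Sp eta = 0).
        { unfold Sp. transitivity (sumB B (fun _ => 0)); [|apply sumB_zero]. apply sumB_ext. intros b Hb.
          specialize (Hgamma b Hb).
          rewrite pref_eq by auto. rewrite yfun_nonpos by nra. unfold Rdiv; ring. }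
        assert (0 < INR B * P) by nra. lra. }
      assert (Hpn : forall b, (b < B)%nat -> 0 <= pref alpha beta kappa eta gamma b).
      { intros b Hb. specialize (Hgamma b Hb). rewrite pref_eq by auto.
        unfold Rdiv. apply Rmult_le_pos; [apply yfun_nonneg; lra | apply Rlt_le, Rinv_0_lt_compat; lra]. }
      split.
      * split; auto. fold (Sp eta). lra.
      * intros q [Hq Hsq]. unfold objective.
        set (p := pref alpha beta kappa eta gamma).
        set (K := / (eta * c)).
        assert (HK : 0 < K) by (apply Rinv_0_lt_compat; nra).
        apply Rle_trans with
          (sumB B (fun b => Iref alpha beta kappa a (p b * gamma b) + K * (q b - p b))).
        { apply sumB_le. intros b Hb. cbv beta.
          specialize (Hgamma b Hb). assert (Hqb := Hq b Hb).
          rewrite !IG. unfold p. rewrite pref_eq by auto.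
          set (g := gamma b) in *.
          set (Y := yfun alpha beta kappa (eta * g)).
          replace (Y / g * g) with Y by (field; lra).
          assert (Hk := key alpha beta kappa A Halpha Hab Hkappa Hslope HA (eta * g) (q b * g)
                          ltac:(nra) ltac:(nra)).
          fold Y in Hk.
          replace (K * (q b - Y / g)) with ((q b * g - Y) / (eta * g) / c)
            by (unfold K; field; repeat split; lra).
          apply Rmult_le_compat_r with (r := / c) in Hk; [|lra].
          unfold Rdiv in *. lra. }
        rewrite sumB_lin. assert (Ep : sumB B p = Sp eta) by reflexivity. rewrite Ep.
        assert (K * (sumB B q - Sp eta) <= 0) by nra.
        lra.
Qed.
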